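(* There is a two-dimensional interpretation $\Gamma$ of the structure $(\mathbb{Z}^{+},\leq,\mid\,)$ that is uniform in the class of all rings $R[x]$ with $R$ a field of positive characteristic and $x$ a single indeterminate. Consequently, arithmetic $(\mathbb{Z},+,\times)$ is uniformly interpretable in this class of rings.
   Context: An $n$-dimensional interpretation $\Gamma$ of an $\mathcal{L}'$-structure $\mathfrak{M}'$ (domain $M'$) in an $\mathcal{L}$-structure $\mathfrak{M}$ (domain $M$) consists of: an $\mathcal{L}$-formula $\partial_\Gamma$ in $n$ variables defining $\Delta_\Gamma\subseteq M^n$; a surjection $F_\Gamma:\Delta_\Gamma\to M'$; an $\mathcal{L}$-formula $=_\Gamma$ in $2n$ variables such that for $\bm a,\bm b\in\Delta_\Gamma$, $\mathfrak{M}\models\bm a=_\Gamma\bm b$ iff $F_\Gamma(\bm a)=F_\Gamma(\bm b)$; for each $m$-ary relation symbol $Q$ of $\mathcal{L}'$ an $mn$-variable $\mathcal{L}$-formula $Q_\Gamma$ with $\mathfrak{M}\models Q_\Gamma(\bm a_1,\dots,\bm a_m)$ iff $\mathfrak{M}'\models Q(F_\Gamma(\bm a_1),\dots,F_\Gamma(\bm a_m))$; for each $m$-ary function symbol $G$ (constants if $m=0$) an $(m+1)n$-variable $\mathcal{L}$-formula $G_\Gamma$ with $\mathfrak{M}\models G_\Gamma(\bm a_1,\dots,\bm a_m,\bm b)$ iff $G(F_\Gamma(\bm a_1),\dots,F_\Gamma(\bm a_m))=F_\Gamma(\bm b)$ in $\mathfrak{M}'$. The interpretation is uniform in a class $\mathcal{H}$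 of $\mathcal{L}$-structures if the formulas $\partial_\Gamma$, $=_\Gamma$, $Q_\Gamma$, $G_\Gamma$ are the same for every $\mathfrak{M}\in\mathcal{H}$ (the coordinate map may depend on $\mathfrak{M}$). Here $\mathcal{L}$ is the language of rings $(+,\times)$; arithmetic means $(\mathbb{Z},+,\times)$. *)

(* Defs.v *)
From HB Require Import structures.
From mathcomp Require Import all_boot all_order all_algebra.
Set Implicit Arguments. Unset Strict Implicit. Unset Printing Implicit Defensive.
Import GRing.Theory.
Local Open Scope ring_scope.

Inductive rterm : Type :=
  | RVar of nat
  | RAdd of rterm & rterm
  | RMul of rterm & rterm.

Inductive rform : Type :=
  | REq of rterm & rterm
  | RNot of rform
  | RAnd of rform & rform
  | ROr of rform & rform
  | RImp of rform & rform
  | REx of nat & rform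
  | RAll of nat & rform.

Fixpoint teval (R : pzRingType) (e : nat -> R) (t : rterm) : R :=
  match t with
  | RVar i => e i
  | RAdd t1 t2 => teval e t1 + teval e t2
  | RMul t1 t2 => teval e t1 * teval e t2
  end.

Definition upd (R : Type) (e : nat -> R) (i : nat) (r : R) : nat -> R :=
  fun j => if j == i then r else e j.

Fixpoint sat (R : pzRingType) (e : nat -> R) (f : rform) : Prop :=
  match f with
  | REq t1 t2 => teval e t1 = teval e t2
  | RNot g => ~ sat e g
  | RAnd g h => sat e g /\ sat e h
  | ROr g h => sat e g \/ sat e h
  | RImp g h => sat e g -> sat e h
  | REx i g => exists r : R, sat (upd e i r) g
  | RAll i g => forall r : R, sat (upd e i r) g
  end.

(* M |= phi(a_0, ..., a_{k-1}) : variable i is assigned the i-th entry of s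
   (variables beyond the list get the value 0). *)
Definition holds (R : pzRingType) (f : rform) (s : seq R) : Prop :=
  sat (fun i => nth 0 s i) f.

Definition pos_char (R : fieldType) : Prop := exists p : nat, p \in [pchar R].

(* A 2-dimensional interpretation of (Z^+, <=, |) in M given by formulas
   dom (2 vars), eqf (4 vars), le (4 vars), dv (4 vars), with coordinate map F
   (only its values on the domain Delta matter; positive integers as nats > 0). *)
Definition interp2_Zpos_le_dvd (M : pzRingType) (dom eqf le dv : rform)
    (F : M -> M -> nat) : Prop :=
  [/\ (forall a1 a2, holds dom [:: a1; a2] -> (0 < F a1 a2)%N),
      (forall n : nat, (0 < n)%N -> exists a1 a2, holds dom [:: a1; a2] /\ F a1 a2 = n),
      (forall a1 a2 b1 b2, holds dom [:: a1; a2] -> holds dom [:: b1; b2] ->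
          (holds eqf [:: a1; a2; b1; b2] <-> F a1 a2 = F b1 b2)),
      (forall a1 a2 b1 b2, holds dom [:: a1; a2] -> holds dom [:: b1; b2] ->
          (holds le [:: a1; a2; b1; b2] <-> (F a1 a2 <= F b1 b2)%N)) &
      (forall a1 a2 b1 b2, holds dom [:: a1; a2] -> holds dom [:: b1; b2] ->
          (holds dv [:: a1; a2; b1; b2] <-> (F a1 a2 %| F b1 b2)%N))].

Definition interp_arith (M : pzRingType) (n : nat) (dom eqf add mul : rform)
    (F : seq M -> int) : Prop :=
  let D a := size a = n /\ holds dom a in
  [/\ (forall z : int, exists a, D a /\ F a = z),
      (forall a b, D a -> D b -> (holds eqf (a ++ b) <-> F a = F b)),
      (forall a b c, D a -> D b -> D c ->
          (holds add (a ++ b ++ c) <-> F a + F b = F c)) &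
      (forall a b c, D a -> D b -> D c ->
          (holds mul (a ++ b ++ c) <-> F a * F b = F c))].

(* Main.v *)
Require Import Defs.
From mathcomp Require Import all_boot all_order all_algebra.
From mathcomp Require Import zify ring.
From Stdlib Require Import FunctionalExtensionality.
Set Implicit Arguments. Unset Strict Implicit. Unset Printing Implicit Defensive.
Import GRing.Theory.

Ltac szlia := do 8? (match goal with |- context [size ?x] =>
  let n := fresh "n" in set n := size x; clearbody n end); lia.

Lemma updE (T : Type) (e : nat -> T) i r j : upd e i r j = if j == i then r else e j.
Proof. by []. Qed.

Fixpoint tren (s : nat -> nat) (t : rterm) : rterm :=
  match t with
  | RVar i => RVar (s i)
  | RAdd a b => RAdd (tren s a) (tren s b)
  | RMul a b => RMul (tren s a) (tren s b)
  end.

Fixpoint rren (s : nat -> nat) (f : rform) : rform :=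
  match f with
  | REq a b => REq (tren s a) (tren s b)
  | RNot g => RNot (rren s g)
  | RAnd g h => RAnd (rren s g) (rren s h)
  | ROr g h => ROr (rren s g) (rren s h)
  | RImp g h => RImp (rren s g) (rren s h)
  | REx i g => REx (s i) (rren s g)
  | RAll i g => RAll (s i) (rren s g)
  end.

Fixpoint rbv (f : rform) : seq nat :=
  match f with
  | REq _ _ => [::]
  | RNot g => rbv g
  | RAnd g h | ROr g h | RImp g h => rbv g ++ rbv h
  | REx i g | RAll i g => i :: rbv g
  end.

Lemma teval_ren (R : pzRingType) (s : nat -> nat) (e : nat -> R) t :
  teval e (tren s t) = teval (e \o s) t.
Proof. by elim: t => //= a -> b ->. Qed.

Lemma sat_ren (R : pzRingType) (s : nat -> nat) f :
  (forall b, b \in rbv f -> forall x, s x = s b -> x = b) ->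
  forall e : nat -> R, sat e (rren s f) <-> sat (e \o s) f.
Proof.
elim: f => [a b|g IH|g IHg h IHh|g IHg h IHh|g IHg h IHh|i g IH|i g IH] /= Hb e.
- by rewrite !teval_ren.
- by rewrite IH.
- have A : forall c, c \in rbv g -> forall x, s x = s c -> x = c.
    by move=> c hc; apply: Hb; rewrite mem_cat hc.
  have B : forall c, c \in rbv h -> forall x, s x = s c -> x = c.
    by move=> c hc; apply: Hb; rewrite mem_cat hc orbT.
  have := IHg A e; have := IHh B e; tauto.
- have A : forall c, c \in rbv g -> forall x, s x = s c -> x = c.
    by move=> c hc; apply: Hb; rewrite mem_cat hc.
  have B : forall c, c \in rbv h -> forall x, s x = s c -> x = c.
    by move=> c hc; apply: Hb; rewrite mem_cat hc orbT.
  have := IHg A e; have := IHh B e; tauto.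
- have A : forall c, c \in rbv g -> forall x, s x = s c -> x = c.
    by move=> c hc; apply: Hb; rewrite mem_cat hc.
  have B : forall c, c \in rbv h -> forall x, s x = s c -> x = c.
    by move=> c hc; apply: Hb; rewrite mem_cat hc orbT.
  have := IHg A e; have := IHh B e; tauto.
- have H1 : forall r, upd e (s i) r \o s = upd (e \o s) i r.
    move=> r; apply: functional_extensionality => x /=; rewrite !updE.
    case: (eqVneq x i) => [->|nx]; first by rewrite eqxx.
    case: (eqVneq (s x) (s i)) => // E; have := Hb i (mem_head _ _) x E; by move/eqP: nx.
  split=> [[r Hr]|[r Hr]]; exists r.
    by rewrite -H1 -IH // => c hc; apply: Hb; rewrite inE hc orbT.
  by rewrite IH ?H1 // => c hc; apply: Hb; rewrite inE hc orbT.
- have H1 : forall r, upd e (s i) r \o s = upd (e \o s) i r.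
    move=> r; apply: functional_extensionality => x /=; rewrite !updE.
    case: (eqVneq x i) => [->|nx]; first by rewrite eqxx.
    case: (eqVneq (s x) (s i)) => // E; have := Hb i (mem_head _ _) x E; by move/eqP: nx.
  split=> Hr r.
    by rewrite -H1 -IH // => c hc; apply: Hb; rewrite inE hc orbT.
  by rewrite IH ?H1 // => c hc; apply: Hb; rewrite inE hc orbT.
Qed.

Inductive nform : Type :=
  | NEq of nat & nat
  | NLe of nat & nat
  | NDv of nat & nat
  | ND of nat & nat & nat
  | NNot of nform
  | NAnd of nform & nform
  | NImp of nform & nform
  | NEx of nat & nform
  | NAll of nat & nform.

Fixpoint nsat (v : nat -> nat) (f : nform) : Prop :=
  match f with
  | NEq i j => v i = v j
  | NLe i j => (v i <= v j)%N
  | NDv i j => (v i %| v j)%N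
  | ND i j k => (v j <= v k)%N /\ (v i %| v k - v j)%N
  | NNot g => ~ nsat v g
  | NAnd g h => nsat v g /\ nsat v h
  | NImp g h => nsat v g -> nsat v h
  | NEx i g => exists n, (0 < n)%N /\ nsat (upd v i n) g
  | NAll i g => forall n, (0 < n)%N -> nsat (upd v i n) g
  end.

Fixpoint nfv (f : nform) : seq nat :=
  match f with
  | NEq i j | NLe i j | NDv i j => [:: i; j]
  | ND i j k => [:: i; j; k]
  | NNot g => nfv g
  | NAnd g h | NImp g h => nfv g ++ nfv h
  | NEx i g | NAll i g => [seq x <- nfv g | x != i]
  end.

Definition L (i : nat) : nat := if (i < 6)%N then (2 * i)%N else (4 * i)%N.

Definition asig (a b c : nat) (x : nat) : nat :=
  match x with
  | 0 => L a | 1 => (L a).+1 | 2 => L b | 3 => (L b).+1 | 4 => L c | 5 => (L c).+1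
  | _ => (4 * x + 2)%N
  end.

Section Tr.
Variables (domR eqR leR dvR dR : rform).

Fixpoint tr (f : nform) : rform :=
  match f with
  | NEq i j => rren (asig i j i) eqR
  | NLe i j => rren (asig i j i) leR
  | NDv i j => rren (asig i j i) dvR
  | ND i j k => rren (asig i j k) dR
  | NNot g => RNot (tr g)
  | NAnd g h => RAnd (tr g) (tr h)
  | NImp g h => RImp (tr g) (tr h)
  | NEx i g => REx (L i) (REx (L i).+1 (RAnd (rren (asig i i i) domR) (tr g)))
  | NAll i g => RAll (L i) (RAll (L i).+1 (RImp (rren (asig i i i) domR) (tr g)))
  end.

Lemma L_even i : ~~ odd (L i).
Proof. rewrite /L; case: ifP => _; by rewrite oddM. Qed.

Lemma L_inj i j : L i = L j -> i = j.
Proof. rewrite /L; case: ifP; case: ifP => ? ? ?; lia. Qed.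

Lemma L_neS i j : L i <> (L j).+1.
Proof. move=> E; have := L_even i; have := L_even j; rewrite E /= => ->. by []. Qed.

Lemma asig_ok a b c (f : rform) : all (fun x => 6 <= x)%N (rbv f) ->
  forall x, x \in rbv f -> forall y, asig a b c y = asig a b c x -> y = x.
Proof.
move=> /allP H x /H hx y; rewrite /asig.
have Hx : (4 * x + 2)%N = match x with
  | 0 => L a | 1 => (L a).+1 | 2 => L b | 3 => (L b).+1 | 4 => L c | 5 => (L c).+1
  | _ => (4 * x + 2)%N end.
  by case: x hx => [|[|[|[|[|[|x]]]]]].
rewrite -Hx.
have nL : forall z, L z <> (4 * x + 2)%N.
  move=> z; rewrite /L; case: ifP => ?; lia.
have nLS : forall z, (L z).+1 <> (4 * x + 2)%N.
  move=> z E; have := L_even z; have : odd (4 * x + 2) = false by rewrite oddD oddM.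
  by rewrite -E /= => ->.
case: y => [|[|[|[|[|[|y]]]]]] // E; try (exfalso; by [apply: nL E|apply: nLS E]); lia.
Qed.

Variables (M : pzRingType) (Fn : M -> M -> nat) (DOM : M -> M -> Prop).
Hypotheses (Hpos : forall a b, DOM a b -> (0 < Fn a b)%N)
  (Hsurj : forall n, (0 < n)%N -> exists a b, DOM a b /\ Fn a b = n)
  (Hdom : forall e : nat -> M, sat e domR <-> DOM (e 0%N) (e 1%N))
  (Heq : forall e : nat -> M, DOM (e 0%N) (e 1%N) -> DOM (e 2%N) (e 3%N) ->
      (sat e eqR <-> Fn (e 0%N) (e 1%N) = Fn (e 2%N) (e 3%N)))
  (Hle : forall e : nat -> M, DOM (e 0%N) (e 1%N) -> DOM (e 2%N) (e 3%N) ->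
      (sat e leR <-> (Fn (e 0%N) (e 1%N) <= Fn (e 2%N) (e 3%N))%N))
  (Hdv : forall e : nat -> M, DOM (e 0%N) (e 1%N) -> DOM (e 2%N) (e 3%N) ->
      (sat e dvR <-> (Fn (e 0%N) (e 1%N) %| Fn (e 2%N) (e 3%N))%N))
  (HD : forall e : nat -> M, DOM (e 0%N) (e 1%N) -> DOM (e 2%N) (e 3%N) ->
      DOM (e 4%N) (e 5%N) ->
      (sat e dR <-> (Fn (e 2%N) (e 3%N) <= Fn (e 4%N) (e 5%N))%N /\
                    (Fn (e 0%N) (e 1%N) %| Fn (e 4%N) (e 5%N) - Fn (e 2%N) (e 3%N))%N))
  (Bdom : all (fun x => 6 <= x)%N (rbv domR))
  (Beq : all (fun x => 6 <= x)%N (rbv eqR))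
  (Ble : all (fun x => 6 <= x)%N (rbv leR))
  (Bdv : all (fun x => 6 <= x)%N (rbv dvR))
  (BD : all (fun x => 6 <= x)%N (rbv dR)).

Definition nenv (e : nat -> M) := fun i => Fn (e (L i)) (e (L i).+1).

Lemma tr_sat (f : nform) : forall e : nat -> M,
  (forall i, i \in nfv f -> DOM (e (L i)) (e (L i).+1)) ->
  (sat e (tr f) <-> nsat (nenv e) f).
Proof.
elim: f => [i j|i j|i j|i j k|g IH|g IHg h IHh|g IHg h IHh|i g IH|i g IH] e He /=.
- rewrite sat_ren; last exact: asig_ok.
  by apply: Heq; apply: He; rewrite !inE eqxx ?orbT.
- rewrite sat_ren; last exact: asig_ok.
  by apply: Hle; apply: He; rewrite !inE eqxx ?orbT.
- rewrite sat_ren; last exact: asig_ok.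
  by apply: Hdv; apply: He; rewrite !inE eqxx ?orbT.
- rewrite sat_ren; last exact: asig_ok.
  by apply: HD; apply: He; rewrite !inE eqxx ?orbT.
- by rewrite IH.
- have := IHg e (fun i hi => He i ltac:(by rewrite mem_cat hi)).
  have := IHh e (fun i hi => He i ltac:(by rewrite mem_cat hi orbT)). tauto.
- have := IHg e (fun i hi => He i ltac:(by rewrite mem_cat hi)).
  have := IHh e (fun i hi => He i ltac:(by rewrite mem_cat hi orbT)). tauto.
- pose e' r1 r2 := upd (upd e (L i) r1) (L i).+1 r2.
  have E1 : forall r1 r2 x, x != i -> e' r1 r2 (L x) = e (L x).
    move=> r1 r2 x nx; rewrite /e' !updE.
    have -> : (L x == (L i).+1) = false by apply/eqP; apply: L_neS.
    by have -> : (L x == L i) = false by apply/eqP => /L_inj /eqP; rewrite (negbTE nx).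
  have E2 : forall r1 r2 x, x != i -> e' r1 r2 (L x).+1 = e (L x).+1.
    move=> r1 r2 x nx; rewrite /e' !updE.
    have -> : ((L x).+1 == (L i).+1) = false.
      by apply/eqP => -[] /L_inj /eqP; rewrite (negbTE nx).
    by have -> : ((L x).+1 == L i) = false by apply/eqP => /esym; apply: L_neS.
  have E3 : forall r1 r2, e' r1 r2 (L i) = r1.
    move=> r1 r2; rewrite /e' !updE eqxx.
    by have -> : (L i == (L i).+1) = false by apply/eqP; apply: L_neS.
  have E4 : forall r1 r2, e' r1 r2 (L i).+1 = r2 by move=> r1 r2; rewrite /e' !updE eqxx.
  have En : forall r1 r2, nenv (e' r1 r2) = upd (nenv e) i (Fn r1 r2).
    move=> r1 r2; apply: functional_extensionality => x; rewrite /nenv updE.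
    case: (eqVneq x i) => [->|nx]; first by rewrite E3 E4.
    by rewrite E1 ?E2.
  have Hd : forall r1 r2, sat (e' r1 r2) (rren (asig i i i) domR) <-> DOM r1 r2.
    move=> r1 r2; rewrite sat_ren; last exact: asig_ok.
    by rewrite Hdom /= E3 E4.
  have Hb : forall r1 r2, DOM r1 r2 -> forall x, x \in nfv g -> DOM (e' r1 r2 (L x)) (e' r1 r2 (L x).+1).
    move=> r1 r2 D x hx; case: (eqVneq x i) => [->|nx]; first by rewrite E3 E4.
    rewrite E1 ?E2 //; apply: He; by rewrite mem_filter nx.
  split.
    move=> [r1 [r2 [Hd1 Hg]]]; rewrite -/(e' r1 r2) in Hd1 Hg.
    move/Hd: Hd1 => Hd1; exists (Fn r1 r2); split; first exact: Hpos.
    by rewrite -En -IH //; exact: Hb.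
  move=> [n [n0 Hn]]; have [r1 [r2 [Dr Fr]]] := Hsurj n0.
  exists r1, r2; rewrite -/(e' r1 r2); split; first by apply/Hd.
  by rewrite IH ?En ?Fr //; exact: Hb.
- pose e' r1 r2 := upd (upd e (L i) r1) (L i).+1 r2.
  have E1 : forall r1 r2 x, x != i -> e' r1 r2 (L x) = e (L x).
    move=> r1 r2 x nx; rewrite /e' !updE.
    have -> : (L x == (L i).+1) = false by apply/eqP; apply: L_neS.
    by have -> : (L x == L i) = false by apply/eqP => /L_inj /eqP; rewrite (negbTE nx).
  have E2 : forall r1 r2 x, x != i -> e' r1 r2 (L x).+1 = e (L x).+1.
    move=> r1 r2 x nx; rewrite /e' !updE.
    have -> : ((L x).+1 == (L i).+1) = false.
      by apply/eqP => -[] /L_inj /eqP; rewrite (negbTE nx).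
    by have -> : ((L x).+1 == L i) = false by apply/eqP => /esym; apply: L_neS.
  have E3 : forall r1 r2, e' r1 r2 (L i) = r1.
    move=> r1 r2; rewrite /e' !updE eqxx.
    by have -> : (L i == (L i).+1) = false by apply/eqP; apply: L_neS.
  have E4 : forall r1 r2, e' r1 r2 (L i).+1 = r2 by move=> r1 r2; rewrite /e' !updE eqxx.
  have En : forall r1 r2, nenv (e' r1 r2) = upd (nenv e) i (Fn r1 r2).
    move=> r1 r2; apply: functional_extensionality => x; rewrite /nenv updE.
    case: (eqVneq x i) => [->|nx]; first by rewrite E3 E4.
    by rewrite E1 ?E2.
  have Hd : forall r1 r2, sat (e' r1 r2) (rren (asig i i i) domR) <-> DOM r1 r2.
    move=> r1 r2; rewrite sat_ren; last exact: asig_ok.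
    by rewrite Hdom /= E3 E4.
  have Hb : forall r1 r2, DOM r1 r2 -> forall x, x \in nfv g -> DOM (e' r1 r2 (L x)) (e' r1 r2 (L x).+1).
    move=> r1 r2 D x hx; case: (eqVneq x i) => [->|nx]; first by rewrite E3 E4.
    rewrite E1 ?E2 //; apply: He; by rewrite mem_filter nx.
  split.
    move=> H n n0; have [r1 [r2 [Dr Fr]]] := Hsurj n0.
    have := H r1 r2; rewrite -/(e' r1 r2) => /(_ (proj2 (Hd r1 r2) Dr)).
    by rewrite IH ?En ?Fr //; exact: Hb.
  move=> H r1 r2; rewrite -/(e' r1 r2) => /Hd Dr.
  by rewrite IH ?En //; [apply: H; exact: Hpos | exact: Hb].
Qed.

End Tr.

Ltac usimpl :=
  rewrite ?updE;
  repeat match goal with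
  | |- context [(?x == ?y :> nat)] =>
      first [ have -> : (x == y) = false by lia | have -> : (x == y) = true by lia ]
  end; cbv iota.

Definition NLt i j := NNot (NLe j i).

Definition AddF N i j k :=
  NAnd (NLt i k) (NAll N (NAnd (NImp (ND N i k) (NDv N j)) (NImp (NDv N j) (ND N i k)))).

Lemma AddP N i j k v : (i < N)%N -> (j < N)%N -> (k < N)%N -> (0 < v j)%N ->
  nsat v (AddF N i j k) <-> (v i + v j = v k)%N.
Proof.
move=> hi hj hk pj /=; split.
  move=> [/negP]; rewrite -ltnNge => lt H.
  have H1 := H (v j) pj; have H2 := H (v k - v i)%N ltac:(lia).
  move: H1 H2; usimpl => -[_ H1] [H2 _].
  have [_ d1] := H1 (dvdnn _).
  have d2 : (v k - v i %| v j)%N by apply: H2; split; [lia | exact: dvdnn].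
  have : v j = (v k - v i)%N by apply/eqP; rewrite eqn_dvd d1 d2.
  lia.
move=> E; split; first by apply/negP; rewrite -ltnNge; lia.
move=> d d0; usimpl.
have -> : (v k - v i = v j)%N by lia.
split; first by move=> [].
move=> h; split => //; lia.
Qed.

Definition SuccF N i s :=
  NAnd (NLt i s) (NAll N (NImp (NLt i N) (NLe s N))).

Lemma SuccP N i s v : (i < N)%N -> (s < N)%N ->
  nsat v (SuccF N i s) <-> (v s = (v i).+1)%N.
Proof.
move=> hi hs /=; split.
  move=> [/negP]; rewrite -ltnNge => lt H.
  have := H (v i).+1 ltac:(lia); usimpl => H1.
  have : (v s <= (v i).+1)%N by apply: H1; apply/negP; rewrite -ltnNge; lia.
  lia.
move=> E; split; first by apply/negP; rewrite -ltnNge; lia.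
move=> n n0; usimpl => /negP; rewrite -ltnNge; lia.
Qed.

Definition LcmF N i j l :=
  NAnd (NDv i l) (NAnd (NDv j l) (NAll N (NImp (NAnd (NDv i N) (NDv j N)) (NDv l N)))).

Lemma LcmP N i j l v : (i < N)%N -> (j < N)%N -> (l < N)%N -> (0 < v i)%N -> (0 < v j)%N ->
  nsat v (LcmF N i j l) <-> v l = lcmn (v i) (v j).
Proof.
move=> hi hj hl pi pj /=; split.
  move=> [d1 [d2 H]].
  have := H (lcmn (v i) (v j)); usimpl => H1.
  have d3 : (v l %| lcmn (v i) (v j))%N.
    apply: H1; first by rewrite lcmn_gt0 pi pj.
    by split; [apply: dvdn_lcml | apply: dvdn_lcmr].
  apply/eqP; rewrite eqn_dvd d3 /=. by rewrite dvdn_lcm d1 d2.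
move=> E; rewrite E; split; first exact: dvdn_lcml.
split; first exact: dvdn_lcmr.
move=> n n0; usimpl => -[d1 d2]; by rewrite E dvdn_lcm d1 d2.
Qed.

Arguments AddF : simpl never.
Arguments SuccF : simpl never.
Arguments LcmF : simpl never.
Arguments NLt : simpl never.

Lemma lcmnS n : lcmn n n.+1 = (n * n.+1)%N.
Proof. by rewrite /lcmn (eqP (coprimenS _)) divn1. Qed.

Definition SqF N i k :=
  NEx N (NEx N.+1 (NAnd (SuccF N.+2 i N) (NAnd (LcmF N.+2 i N N.+1) (AddF N.+2 k i N.+1)))).

Lemma SqP N i k v : (i < N)%N -> (k < N)%N -> (0 < v i)%N ->
  nsat v (SqF N i k) <-> (v k = v i * v i)%N.
Proof.
move=> hi hk pi; rewrite /SqF; cbn [nsat]; split.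
  move=> [a [a0 [b [b0 [H1 [H2 H3]]]]]].
  move: H1; rewrite SuccP; try lia; usimpl => H1.
  move: H2; rewrite LcmP; try lia; usimpl; try lia; move=> H2.
  move: H3; rewrite AddP; try lia; usimpl; try lia; move=> H3.
  rewrite H1 lcmnS in H2; nia.
move=> E; exists (v i).+1; split => //; exists (v i * (v i).+1)%N; split; first by nia.
rewrite SuccP; try lia; usimpl; split => //.
rewrite LcmP; try lia; usimpl; try lia; split; first by rewrite lcmnS.
rewrite AddP; try lia; usimpl; nia.
Qed.
Arguments SqF : simpl never.

Definition MulF N i j k :=
  NEx N (NEx N.+1 (NEx N.+2 (NEx N.+3 (NEx N.+4 (NEx (N+5) (
    NAnd (SqF (N+6) i N) (NAnd (SqF (N+6) j N.+1) (NAnd (AddF (N+6) i j N.+2)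
    (NAnd (SqF (N+6) N.+2 N.+3) (NAnd (AddF (N+6) k k N.+4)
    (NAnd (AddF (N+6) N.+4 N (N+5)) (AddF (N+6) (N+5) N.+1 N.+3)))))))))))).

Lemma MulP N i j k v : (i < N)%N -> (j < N)%N -> (k < N)%N ->
  (0 < v i)%N -> (0 < v j)%N -> (0 < v k)%N ->
  nsat v (MulF N i j k) <-> (v k = v i * v j)%N.
Proof.
move=> hi hj hk pi pj pk; rewrite /MulF; cbn [nsat]; split.
  move=> [a [a0 [b [b0 [c [c0 [d [d0 [f [f0 [g [g0 [H1 [H2 [H3 [H4 [H5 [H6 H7]]]]]]]]]]]]]]]]]].
  move: H1; rewrite SqP; try lia; usimpl; try lia; move=> H1.
  move: H2; rewrite SqP; try lia; usimpl; try lia; move=> H2.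
  move: H3; rewrite AddP; try lia; usimpl; try lia; move=> H3.
  move: H4; rewrite SqP; try lia; usimpl; try lia; move=> H4.
  move: H5; rewrite AddP; try lia; usimpl; try lia; move=> H5.
  move: H6; rewrite AddP; try lia; usimpl; try lia; move=> H6.
  move: H7; rewrite AddP; try lia; usimpl; try lia; move=> H7.
move=> E.
exists (v i * v i)%N; split; first by nia.
exists (v j * v j)%N; split; first by nia.
exists (v i + v j)%N; split; first by nia.
exists ((v i + v j) * (v i + v j))%N; split; first by nia.
exists (v k + v k)%N; split; first by nia.
exists (v k + v k + v i * v i)%N; split; first by nia.
rewrite SqP; try lia; usimpl; try lia; split => //.
rewrite SqP; try lia; usimpl; try lia; split => //.
rewrite AddP; try lia; usimpl; try lia; split => //.
rewrite SqP; try lia; usimpl; try lia; split => //.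
rewrite AddP; try lia; usimpl; try lia; split => //.
rewrite AddP; try lia; usimpl; try lia; split => //.
rewrite AddP; try lia; usimpl; try lia; nia.
Qed.
Arguments MulF : simpl never.

Definition ZEqF := NEx 6 (NAnd (AddF 10 0 3 6) (AddF 10 1 2 6)).

Lemma ZEqP v : (0 < v 0)%N -> (0 < v 1)%N -> (0 < v 2)%N -> (0 < v 3)%N ->
  nsat v ZEqF <-> (v 0 + v 3 = v 1 + v 2)%N.
Proof.
move=> p0 p1 p2 p3; rewrite /ZEqF; cbn [nsat]; split.
  move=> [a [a0 [H1 H2]]].
  move: H1; rewrite AddP; try lia; usimpl; try lia; move=> H1.
  move: H2; rewrite AddP; try lia; usimpl; try lia.
move=> E; exists (v 0 + v 3)%N; split; first lia.
rewrite !AddP; try lia; usimpl; lia.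
Qed.

Definition ZAddF := NEx 6 (NEx 7 (NEx 8 (NAnd (AddF 10 0 2 6) (NAnd (AddF 10 6 5 8)
  (NAnd (AddF 10 1 3 7) (AddF 10 7 4 8)))))).

Lemma ZAddP v : (0 < v 0)%N -> (0 < v 1)%N -> (0 < v 2)%N -> (0 < v 3)%N ->
  (0 < v 4)%N -> (0 < v 5)%N ->
  nsat v ZAddF <-> (v 0 + v 2 + v 5 = v 1 + v 3 + v 4)%N.
Proof.
move=> p0 p1 p2 p3 p4 p5; rewrite /ZAddF; cbn [nsat]; split.
  move=> [a [a0 [b [b0 [c [c0 [H1 [H2 [H3 H4]]]]]]]]].
  move: H1; rewrite AddP; try lia; usimpl; try lia; move=> H1.
  move: H2; rewrite AddP; try lia; usimpl; try lia; move=> H2.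
  move: H3; rewrite AddP; try lia; usimpl; try lia; move=> H3.
  move: H4; rewrite AddP; try lia; usimpl; try lia.
move=> E; exists (v 0 + v 2)%N; split; first lia.
exists (v 1 + v 3)%N; split; first lia.
exists (v 0 + v 2 + v 5)%N; split; first lia.
rewrite !AddP; try lia; usimpl; lia.
Qed.

Definition ZMulF := NEx 6 (NEx 7 (NEx 8 (NEx 9 (NEx 10 (NEx 11 (NEx 12 (
  NAnd (MulF 20 0 2 6) (NAnd (MulF 20 1 3 7) (NAnd (MulF 20 0 3 8) (NAnd (MulF 20 1 2 9)
  (NAnd (AddF 20 6 7 10) (NAnd (AddF 20 10 5 12) (NAnd (AddF 20 8 9 11) (AddF 20 11 4 12)))))))))))))).

Lemma ZMulP v : (0 < v 0)%N -> (0 < v 1)%N -> (0 < v 2)%N -> (0 < v 3)%N ->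
  (0 < v 4)%N -> (0 < v 5)%N ->
  nsat v ZMulF <-> (v 0 * v 2 + v 1 * v 3 + v 5 = v 0 * v 3 + v 1 * v 2 + v 4)%N.
Proof.
move=> p0 p1 p2 p3 p4 p5; rewrite /ZMulF; cbn [nsat]; split.
  move=> [a [a0 [b [b0 [c [c0 [d [d0 [f [f0 [g [g0 [h [h0 [H1 [H2 [H3 [H4 [H5 [H6 [H7 H8]]]]]]]]]]]]]]]]]]]]].
  move: H1; rewrite MulP; try lia; usimpl; try lia; move=> H1.
  move: H2; rewrite MulP; try lia; usimpl; try lia; move=> H2.
  move: H3; rewrite MulP; try lia; usimpl; try lia; move=> H3.
  move: H4; rewrite MulP; try lia; usimpl; try lia; move=> H4.
  move: H5; rewrite AddP; try lia; usimpl; try lia; move=> H5.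
  move: H6; rewrite AddP; try lia; usimpl; try lia; move=> H6.
  move: H7; rewrite AddP; try lia; usimpl; try lia; move=> H7.
  move: H8; rewrite AddP; try lia; usimpl; try lia; move=> H8.
move=> E.
exists (v 0 * v 2)%N; split; first nia.
exists (v 1 * v 3)%N; split; first nia.
exists (v 0 * v 3)%N; split; first nia.
exists (v 1 * v 2)%N; split; first nia.
exists (v 0 * v 2 + v 1 * v 3)%N; split; first nia.
exists (v 0 * v 3 + v 1 * v 2)%N; split; first nia.
exists (v 0 * v 2 + v 1 * v 3 + v 5)%N; split; first nia.
rewrite !MulP; try lia; usimpl; try nia.
rewrite !AddP; try lia; usimpl; try nia.
Qed.

Local Open Scope ring_scope.

Section PropDefs.
Variables (M : pzRingType) (o : M).
Definition Uo u := exists v, u * v = o.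
Definition Zo (u : M) := u + u = u.
Definition Co u := Zo u \/ Uo u.
Definition Dvo (a b : M) := exists w, b = a * w.
Definition D1o t := ~ Uo t /\ ~ Zo t /\ forall g, exists c, Co c /\ exists w, t * w + c = g.
Definition Pwo T F := (forall g, Dvo g F /\ ~ Uo g -> Dvo T g) /\ exists w, T * w + o = F + w.
Definition PPo t f := Pwo t f /\ Pwo (t + o) (f + o).
Definition DOMo t f := D1o t /\ PPo t f /\ ~ f = t.
Definition EQo f g := exists c, Uo c /\ exists d, Co d /\ g = c * f + d.
Definition LEo t f g := exists h, PPo t h /\ EQo h g /\ Dvo f h.
Definition DVo t f g := exists h, PPo t h /\ EQo h g /\ exists w, h + t * w = t + f * w.
Definition DDo t1 f1 f2 f3 := exists v, PPo t1 v /\ EQo v f2 /\ exists w, PPo t1 w /\ EQo w f3 /\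
  exists u, w = v * u /\ exists k, f1 * k + t1 = t1 * u + t1 * k.
End PropDefs.

Definition vr := RVar.
Definition fU (T : rterm) b := REx b (REq (RMul T (vr b)) (vr 6)).
Definition fZ T := REq (RAdd T T) T.
Definition fC T b := ROr (fZ T) (fU T b).
Definition fDv A B b := REx b (REq B (RMul A (vr b))).
Definition fD1 T b1 b2 b3 := RAnd (RNot (fU T b1)) (RAnd (RNot (fZ T))
  (RAll b1 (REx b2 (RAnd (fC (vr b2) b3) (REx b3 (REq (RAdd (RMul T (vr b3)) (vr b2)) (vr b1))))))).
Definition fPw T F b1 b2 := RAnd (RAll b1 (RImp (RAnd (fDv (vr b1) F b2) (RNot (fU (vr b1) b2)))
   (fDv T (vr b1) b2))) (REx b1 (REq (RAdd (RMul T (vr b1)) (vr 6)) (RAdd F (vr b1)))).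
Definition fPP T F b1 b2 := RAnd (fPw T F b1 b2) (fPw (RAdd T (vr 6)) (RAdd F (vr 6)) b1 b2).
Definition fEQ F G b1 b2 b3 := REx b1 (RAnd (fU (vr b1) b2) (REx b2 (RAnd (fC (vr b2) b3)
   (REq G (RAdd (RMul (vr b1) F) (vr b2)))))).
Definition fONE body := REx 6 (RAnd (RAll 7 (REq (RMul (vr 6) (vr 7)) (vr 7))) body).

Definition domR := fONE (RAnd (fD1 (vr 0) 8 9 10) (RAnd (fPP (vr 0) (vr 1) 8 9) (RNot (REq (vr 1) (vr 0))))).
Definition eqR := fONE (fEQ (vr 1) (vr 3) 8 9 10).
Definition leR := fONE (REx 11 (RAnd (fPP (vr 0) (vr 11) 8 9) (RAnd (fEQ (vr 11) (vr 3) 8 9 10) (fDv (vr 1) (vr 11) 8)))).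
Definition dvR := fONE (REx 11 (RAnd (fPP (vr 0) (vr 11) 8 9) (RAnd (fEQ (vr 11) (vr 3) 8 9 10)
  (REx 8 (REq (RAdd (vr 11) (RMul (vr 0) (vr 8))) (RAdd (vr 0) (RMul (vr 1) (vr 8)))))))).
Definition dR := fONE (REx 11 (RAnd (fPP (vr 0) (vr 11) 8 9) (RAnd (fEQ (vr 11) (vr 3) 8 9 10)
  (REx 12 (RAnd (fPP (vr 0) (vr 12) 8 9) (RAnd (fEQ (vr 12) (vr 5) 8 9 10)
  (REx 13 (RAnd (REq (vr 12) (RMul (vr 11) (vr 13)))
  (REx 8 (REq (RAdd (RMul (vr 1) (vr 8)) (vr 0)) (RAdd (RMul (vr 0) (vr 13)) (RMul (vr 0) (vr 8))))))))))))).

Section Sem.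
Variable M : pzRingType.
Implicit Types e : nat -> M.

Lemma domR_sat e : sat e domR <-> exists o, (forall z, o * z = z) /\ DOMo o (e 0%N) (e 1%N).
Proof. by split => H; exact H. Qed.
Lemma eqR_sat e : sat e eqR <-> exists o, (forall z, o * z = z) /\ EQo o (e 1%N) (e 3%N).
Proof. by split => H; exact H. Qed.
Lemma leR_sat e : sat e leR <-> exists o, (forall z, o * z = z) /\ LEo o (e 0%N) (e 1%N) (e 3%N).
Proof. by split => H; exact H. Qed.
Lemma dvR_sat e : sat e dvR <-> exists o, (forall z, o * z = z) /\ DVo o (e 0%N) (e 1%N) (e 3%N).
Proof. by split => H; exact H. Qed.
Lemma dR_sat e : sat e dR <-> exists o, (forall z, o * z = z) /\ DDo o (e 0%N) (e 1%N) (e 3%N) (e 5%N).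
Proof. by split => H; exact H. Qed.

Lemma one_collapse (P : M -> Prop) : (exists o, (forall z, o * z = z) /\ P o) <-> P 1.
Proof.
split.
  move=> [o [Ho Po]]; have E : o = 1 by rewrite -[o]mulr1 Ho.
  by rewrite -E.
by move=> H; exists 1; split => //; exact: mul1r.
Qed.
End Sem.

Lemma bvs : [/\ all (fun x => 6 <= x)%N (rbv domR), all (fun x => 6 <= x)%N (rbv eqR),
  all (fun x => 6 <= x)%N (rbv leR), all (fun x => 6 <= x)%N (rbv dvR) & all (fun x => 6 <= x)%N (rbv dR)].
Proof. by []. Qed.

Local Open Scope ring_scope.

Section PolyMath.
Variable R : fieldType.
Local Notation P := {poly R}.
Implicit Types t f g u : P.


Lemma Uo1 u : Uo 1 u <-> size u = 1%N.
Proof.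
rewrite /Uo; split.
  by move/unitrPr; rewrite poly_unitE => /andP[/eqP].
move=> su; apply/unitrPr; rewrite poly_unitE su eqxx /= unitfE.
have : lead_coef u != 0 by rewrite lead_coef_eq0 -size_poly_eq0 su.
by rewrite lead_coefE su.
Qed.

Lemma Zo0 u : Zo u <-> u = 0.
Proof. rewrite /Zo; split => [H|->]; last by rewrite addr0. by apply: (addrI u); rewrite addr0. Qed.

Lemma Co1 u : Co 1 u <-> (size u <= 1)%N.
Proof.
rewrite /Co Zo0 Uo1; split; first by case=> [->|->]; rewrite ?size_poly0.
rewrite leq_eqVlt ltnS leqn0 size_poly_eq0; case/orP => [/eqP|/eqP]; by [right|left].
Qed.

Lemma sizeX2 t n : size t = 2%N -> size (t ^+ n) = n.+1.
Proof.
move=> st; have t0 : t != 0 by rewrite -size_poly_eq0 st.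
have := size_exp t n; rewrite st mul1n.
have : t ^+ n != 0 by rewrite expf_neq0.
rewrite -size_poly_eq0; case: (size _) => //= m _ ->. by [].
Qed.

Definition rt t := - t`_0 / t`_1.

Lemma t1_neq0 t : size t = 2%N -> t`_1 != 0.
Proof. move=> st; have : lead_coef t != 0 by rewrite lead_coef_eq0 -size_poly_eq0 st. by rewrite lead_coefE st. Qed.

Lemma tfact t : size t = 2%N -> t = (t`_1)%:P * ('X - (rt t)%:P).
Proof.
move=> st; have h1 := t1_neq0 st.
apply/polyP => i; rewrite coefCM coefB coefX coefC /rt.
case: i => [|[|i]] /=; first by field.
  by rewrite subr0 mulr1.
by rewrite subr0 mulr0 nth_default // st.
Qed.

Lemma root_rt t : size t = 2%N -> root t (rt t).
Proof. move=> st; rewrite /root {1}(tfact st) hornerM hornerXsubC subrr mulr0. by []. Qed.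

Lemma dvt t g : size t = 2%N -> (Dvo t g <-> root g (rt t)).
Proof.
move=> st; split.
  by move=> [w ->]; rewrite /root hornerM (rootP (root_rt st)) mul0r.
move/factor_theorem => [q ->]; exists (q * (t`_1)^-1%:P).
rewrite {2}(tfact st).
have -> : (t`_1)%:P * ('X - (rt t)%:P) * (q * (t`_1)^-1%:P) =
  ((t`_1)%:P * (t`_1)^-1%:P) * (q * ('X - (rt t)%:P)) by ring.
by rewrite -polyCM mulfV ?t1_neq0 // mul1r.
Qed.

Lemma divpow t : size t = 2%N -> forall n g w, g * w = t ^+ n -> ~~ root g (rt t) -> size g = 1%N.
Proof.
move=> st; elim=> [|n IH] g w E ng; first by apply/Uo1; exists w; rewrite E expr0.
have rw : root w (rt t).
  have : root (g * w) (rt t) by rewrite E exprS rootM root_rt.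
  by rewrite rootM (negbTE ng).
move/factor_theorem: rw => [w' ew].
apply: (IH g (w' * (t`_1)^-1%:P)) => //.
have hX : ('X - (rt t)%:P) != 0 by rewrite -size_poly_eq0 size_XsubC.
apply: (mulIf hX).
have c0 : t`_1 != 0 := t1_neq0 st.
have E2 : g * w' * ('X - (rt t)%:P) = (t`_1)%:P * ('X - (rt t)%:P) * t ^+ n.
  by rewrite -mulrA -ew E exprS -(tfact st).
have -> : g * (w' * (t`_1)^-1%:P) * ('X - (rt t)%:P) =
   (t`_1)^-1%:P * (g * w' * ('X - (rt t)%:P)) by ring.
rewrite E2.
have -> : (t`_1)^-1%:P * ((t`_1)%:P * ('X - (rt t)%:P) * t ^+ n) =
   ((t`_1)^-1%:P * (t`_1)%:P) * (t ^+ n * ('X - (rt t)%:P)) by ring.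
by rewrite -polyCM mulVf // mul1r.
Qed.

Lemma D1_size t : D1o 1 t <-> size t = 2%N.
Proof.
split.
  move=> [nU [nZ H]].
  have s1 : size t <> 1%N by move/Uo1.
  have s0 : t != 0 by apply/eqP => /Zo0.
  have [c [/Co1 sc [w E]]] := H 'X.
  have w0 : w != 0.
    apply/eqP => w0; move: E; rewrite w0 mulr0 add0r => Ec.
    by move: sc; rewrite Ec size_polyX.
  have : size (t * w) = 2%N.
    have -> : t * w = 'X - c by rewrite -E addrK.
    by rewrite (size1_polyC sc) size_XsubC.
  rewrite size_mul //.
  have : size w != 0%N by rewrite size_poly_eq0.
  have : size t != 0%N by rewrite size_poly_eq0.
  move=> a b cc; move: s1 a b cc; set x := size t; set y := size w; lia.
move=> st; split; first by move/Uo1; rewrite st.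
split; first by move/Zo0 => t0; move: st; rewrite t0 size_poly0.
move=> g; exists (g %% t); split.
  apply/Co1; have := ltn_modp g t; rewrite st -size_poly_eq0 st /=; szlia.
exists (g %/ t); by rewrite mulrC -divp_eq.
Qed.

Lemma sz2D1 t : size t = 2%N -> size (t + 1) = 2%N.
Proof. by move=> st; rewrite size_polyDl // size_poly1 st. Qed.

Lemma sz2B1 t : size t = 2%N -> size (t - 1) = 2%N.
Proof. by move=> st; rewrite size_polyDl // size_polyN size_poly1 st. Qed.

Lemma Pw_pow t f : size t = 2%N -> (Pwo 1 t f <-> exists n, f = t ^+ n).
Proof.
move=> st; split; last first.
  move=> [n ->]; split.
    move=> g [[w Ew] nU]; apply/dvt => //; apply/negPn/negP => ng.
    by apply: nU; apply/Uo1; apply: (divpow st (esym Ew)).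
  have E := subrXX t 1 n; rewrite expr1n in E.
  set w := \sum_(i < n) _ in E; exists w.
  have -> : t ^+ n = (t - 1) * w + 1 by rewrite -E subrK.
  ring.
have t0 : t != 0 by rewrite -size_poly_eq0 st.
have U1 : ~ Uo 1 (t - 1) by move/Uo1; rewrite sz2B1.
suff H : forall n f, (size f <= n)%N -> Pwo 1 t f -> exists k, f = t ^+ k.
  by move=> Hf; apply: (H (size f)).
elim=> [|n IH] {}f sf [H1 [w Ew]].
  move: sf; rewrite leqn0 size_poly_eq0 => /eqP f0; exfalso; apply: U1.
  by exists (- w); rewrite mulrN mulrBl mul1r; move: Ew; rewrite f0 add0r => Ew; rewrite -{2}Ew; ring.
have f0 : f != 0.
  apply/eqP => f0; apply: U1.
  by exists (- w); rewrite mulrN mulrBl mul1r; move: Ew; rewrite f0 add0r => Ew; rewrite -{2}Ew; ring.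
case: (boolP (size f == 1%N)) => [/eqP s1|s1].
  have tw : t * w = f + w - 1 by rewrite -Ew addrK.
  have Ew2 : (t - 1) * w = f - 1 by rewrite mulrBl mul1r tw; ring.
  case: (eqVneq w 0) => [w0|w0].
    move: Ew2; rewrite w0 mulr0 => /eqP; rewrite eq_sym subr_eq0 => /eqP ->.
    by exists 0%N; rewrite expr0.
  exfalso; have : size ((t - 1) * w) = size (f - 1) by rewrite Ew2.
  rewrite size_mul ?(sz2B1 st) //; last by rewrite -size_poly_eq0 (sz2B1 st).
  have := size_polyD f (- 1); rewrite size_polyN size_poly1 s1 /=.
  have : size w != 0%N by rewrite size_poly_eq0.
  szlia.
have [f' Ef'] : Dvo t f.
  by apply: H1; split; [exists 1; rewrite mulr1 | move/Uo1 => /eqP; rewrite (negbTE s1)].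
have f'0 : f' != 0 by apply/eqP => f'0; move: f0; rewrite Ef' f'0 mulr0 eqxx.
have [k Ek] : exists k, f' = t ^+ k.
  apply: (IH f').
    move: sf; rewrite Ef' size_mul // st.
    have : size f' != 0%N by rewrite size_poly_eq0.
    szlia.
  split.
    move=> g [[v Ev] nU]; apply: H1; split => //; exists (t * v).
    by rewrite Ef' Ev mulrCA.
  exists (w - f'); rewrite mulrBr; move: Ew; rewrite Ef' => Ew.
  have : t * w = t * f' + w - 1 by rewrite -Ew addrK.
  move=> ->; ring.
by exists k.+1; rewrite Ef' Ek exprS.
Qed.

End PolyMath.

Local Open Scope ring_scope.


Section Char.
Variables (R : fieldType) (p : nat).
Hypothesis hp : p \in [pchar R].
Local Notation P := {poly R}.
Implicit Types t f g u : P.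

Lemma pr : prime p. Proof. exact: pcharf_prime hp. Qed.
Lemma p_gt1 : (1 < p)%N. Proof. exact: prime_gt1 pr. Qed.

Lemma hpP : p \in [pchar P].
Proof. by rewrite pchar_poly. Qed.

Lemma pnat_pe e : [pchar P].-nat (p ^ e)%N.
Proof.
rewrite pnatX; apply/orP; left.
by rewrite /pnat prime_gt0 ?pr //= primes_prime ?pr //= andbT hpP.
Qed.

Lemma frobD (x y : P) e : (x + y) ^+ (p ^ e)%N = x ^+ (p ^ e)%N + y ^+ (p ^ e)%N.
Proof. exact: exprDn_pchar (pnat_pe e). Qed.

Lemma frob_inj (x y : P) : x ^+ p = y ^+ p -> x = y.
Proof.
move=> E; have : (x - y) ^+ p = 0.
  by rewrite -(pFrobenius_autE hpP) rmorphB /= !(pFrobenius_autE hpP) E subrr.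
by move/eqP; rewrite expf_eq0 subr_eq0 => /andP[_ /eqP].
Qed.

Lemma addpow t : size t = 2%N -> forall n, (0 < n)%N -> (t + 1) ^+ n = t ^+ n + 1 ->
  exists e, n = (p ^ e)%N.
Proof.
move=> st; have t0 : t != 0 by rewrite -size_poly_eq0 st.
suff H : forall N n, (n <= N)%N -> (0 < n)%N -> (t + 1) ^+ n = t ^+ n + 1 -> exists e, n = (p ^ e)%N.
  by move=> n; apply: (H n).
elim=> [|N IH] n nN n0 E; first by lia.
case: (boolP (p %| n)%N) => [pn|pn].
  have [m Em] : exists m, n = (m * p)%N by exists (n %/ p)%N; rewrite divnK.
  have p1 := p_gt1.
  have m0 : (0 < m)%N by move: n0; rewrite Em muln_gt0 => /andP[].
  have [e Ee] : exists e, m = (p ^ e)%N.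
    have mn : (m < n)%N by rewrite Em ltn_Pmulr.
    apply: (IH m); [by move: mn nN; clear; lia | done |].
    apply: frob_inj; rewrite -!exprM -Em E.
    have := frobD (t ^+ m) 1 1; rewrite expn1 expr1n -exprM -Em => ->. by [].
  by exists e.+1; rewrite Em Ee expnSr.
have nR : (n%:R : R) != 0 by rewrite -(dvdn_pcharf hp).
have nP : (n%:R : P) != 0 by rewrite -(rmorph_nat (@polyC R)) polyC_eq0.
have d0 : t^`() != 0.
  apply/eqP => /(congr1 (fun q : P => q`_0)); rewrite coef_deriv coef0 mulr1n.
  by apply/eqP; apply: t1_neq0.
have D := congr1 deriv E.
have d1 : (1 : P)^`() = 0 by rewrite -polyC1 derivC.
rewrite !derivD !deriv_exp !derivD d1 !addr0 in D.
rewrite -(mulr_natr (t^`() * (t + 1) ^+ n.-1)) -(mulr_natr (t^`() * t ^+ n.-1)) in D.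
move/(mulIf nP)/(mulfI d0): D => D.
have := congr1 (fun q : P => q.[rt t]) D; rewrite /= !horner_exp hornerD hornerC.
rewrite (rootP (root_rt st)) add0r expr1n expr0n.
case: (n.-1 == 0)%N / eqP => [n1|_]; last by move/eqP; rewrite oner_eq0.
have n_1 : n = 1%N by lia.
by exists 0%N; rewrite n_1 expn0.
Qed.
End Char.

Local Open Scope ring_scope.


Section Char2.
Variables (R : fieldType) (p : nat).
Hypothesis hp : p \in [pchar R].
Local Notation P := {poly R}.
Implicit Types t f g u : P.

Lemma PP_pow t f : size t = 2%N -> (PPo 1 t f <-> exists e, f = t ^+ (p ^ e)%N).
Proof.
move=> st; split.
  move=> [/(Pw_pow _ st) [n En] /(Pw_pow _ (sz2D1 st)) [m Em]].
  have s1 : size (1 : P) = 1%N by rewrite size_poly1.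
  case: n En => [|n] En.
    exfalso; move: Em; rewrite En expr0.
    case: m => [|m]; first by rewrite expr0 => /eqP; rewrite -subr_eq0 addrK oner_eq0.
    move/(congr1 (fun q : P => size q)); rewrite /= sizeX2 ?(sz2D1 st) //.
    have := size_polyD (1 : P) 1; rewrite s1 /=; szlia.
  have mn : m = n.+1.
    have := congr1 (fun q : P => size q) Em; rewrite /= sizeX2 ?(sz2D1 st) // En.
    rewrite size_polyDl ?sizeX2 ?s1 //; lia.
  have [e Ee] := addpow hp st (ltn0Sn n) ltac:(by rewrite -En -mn Em).
  by exists e; rewrite En Ee.
move=> [e ->]; split; first by apply/(Pw_pow _ st); exists (p ^ e)%N.
apply/(Pw_pow _ (sz2D1 st)); exists (p ^ e)%N.
by rewrite (frobD hp) expr1n.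
Qed.

Lemma sz_pe t e : size t = 2%N -> size (t ^+ (p ^ e)%N) = (p ^ e).+1.
Proof. exact: sizeX2. Qed.

Lemma DOM_pow t f : DOMo 1 t f <-> size t = 2%N /\ exists e, (0 < e)%N /\ f = t ^+ (p ^ e)%N.
Proof.
split.
  move=> [/D1_size st [/(PP_pow _ st) [e Ee] nft]]; split => //; exists e; split => //.
  by case: e Ee => // Ee; exfalso; apply: nft; rewrite Ee expn0 expr1.
move=> [st [e [e0 ->]]]; split; first by apply/D1_size.
split; first by apply/(PP_pow _ st); exists e.
move/(congr1 (fun q : P => size q)); rewrite /= sz_pe // st.
have := p_gt1 hp; have : (p <= p ^ e)%N by rewrite -{1}(expn1 p) leq_exp2l ?(p_gt1 hp).
lia.
Qed.

Lemma EQ_size f g : (1 < size f)%N -> EQo 1 f g -> size g = size f.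
Proof.
move=> sf [c [/Uo1 sc [d [/Co1 sd ->]]]].
have c0 : c != 0 by rewrite -size_poly_eq0 sc.
have f0 : f != 0 by rewrite -size_poly_eq0; move: sf; szlia.
rewrite size_polyDl size_mul // sc //; move: sf sd; szlia.
Qed.

Lemma EQ_pow t (s : P) a b : size t = 2%N -> size s = 2%N ->
  EQo 1 (t ^+ (p ^ a)%N) (s ^+ (p ^ b)%N) <-> a = b.
Proof.
move=> st ss; split.
  move/EQ_size; rewrite !sz_pe //.
  have : (0 < p ^ a)%N by rewrite expn_gt0 prime_gt0 ?(pr hp).
  move=> pa /(_ ltac:(lia)) [].
  by move/eqP; rewrite eqn_exp2l ?(p_gt1 hp) // => /eqP.
move=> <-.
have t1 := t1_neq0 st; have s1 := t1_neq0 ss.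
pose al := s`_1 / t`_1; pose be := s`_0 - al * t`_0.
have es : s = al%:P * t + be%:P.
  apply/polyP => i; rewrite coefD coefCM coefC.
  case: i => [|[|i]] /=; first by rewrite /be; ring.
    by rewrite addr0 /al divfK.
  by rewrite addr0 !nth_default ?mulr0 // ?ss ?st.
exists (al ^+ (p ^ a))%:P; split.
  apply/Uo1; rewrite size_polyC expf_neq0 //.
  by rewrite /al mulf_neq0 // invr_eq0.
exists (be ^+ (p ^ a))%:P; split; first by apply/Co1; exact: size_polyC_leq1.
by rewrite es (frobD hp) exprMn !rmorphXn.
Qed.

Lemma LE_pow t (s : P) a b : size t = 2%N -> size s = 2%N ->
  LEo 1 t (t ^+ (p ^ a)%N) (s ^+ (p ^ b)%N) <-> (a <= b)%N.
Proof.
move=> st ss; have p1 := p_gt1 hp; split.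
  move=> [h [/(PP_pow _ st) [c ->] [/(EQ_pow _ _ st ss) -> [w Ew]]]].
  have w0 : w != 0 by apply/eqP => w0; move: Ew; rewrite w0 mulr0 => /eqP; rewrite expf_eq0 -size_poly_eq0 st andbF.
  have := congr1 (fun q : P => size q) Ew.
  rewrite /= size_mul ?sz_pe //; last by rewrite -size_poly_eq0 sz_pe.
  rewrite -(leq_exp2l _ _ p1).
  have : size w != 0%N by rewrite size_poly_eq0.
  szlia.
move=> ab; exists (t ^+ (p ^ b)%N); split; first by apply/(PP_pow _ st); exists b.
split; first by apply/(EQ_pow _ _ st ss).
exists (t ^+ (p ^ b - p ^ a)%N); rewrite -exprD subnKC // leq_exp2l //.
Qed.

Lemma polyA t (u m : nat) : size t = 2%N -> (0 < u)%N ->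
  (exists w, t ^+ m - 1 = (t ^+ u - 1) * w) <-> (u %| m)%N.
Proof.
move=> st u0.
have sB : forall k, (0 < k)%N -> size (t ^+ k - 1) = k.+1.
  by move=> k k0; rewrite size_polyDl sizeX2 // size_polyN size_poly1.
suff H : forall N m, (m <= N)%N -> (exists w, t ^+ m - 1 = (t ^+ u - 1) * w) <-> (u %| m)%N.
  exact: (H m).
elim=> [|N IH] {}m mN.
  have -> : m = 0%N by lia.
  by rewrite dvdn0; split => // _; exists 0; rewrite expr0 subrr mulr0.
case: (ltnP m u) => mu.
  case: m mN mu => [|m] mN mu.
    by rewrite dvdn0; split => // _; exists 0; rewrite expr0 subrr mulr0.
  have -> : (u %| m.+1)%N = false.
    by apply/negP => /dvdn_leq => /(_ (ltn0Sn _)); lia.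
  split => // -[w Ew]; exfalso.
  have w0 : w != 0.
    by apply/eqP => w0; move: (sB m.+1 (ltn0Sn _)); rewrite Ew w0 mulr0 size_poly0.
  have := congr1 (fun q : P => size q) Ew.
  rewrite /= size_mul ?sB //; last by rewrite -size_poly_eq0 sB.
  have : size w != 0%N by rewrite size_poly_eq0.
  szlia.
have E : t ^+ m - 1 = t ^+ (m - u) * (t ^+ u - 1) + (t ^+ (m - u) - 1).
  by rewrite mulrBr mulr1 -exprD subnK //; ring.
have -> : (u %| m)%N = (u %| m - u)%N.
  by rewrite -{1}(subnK mu) dvdn_addl.
rewrite -IH; last by lia.
split => -[w Ew]; [exists (w - t ^+ (m - u)) | exists (t ^+ (m - u) + w)].
  by move: Ew; rewrite E => Ew; apply: (addIr (t ^+ (m - u) * (t ^+ u - 1))); rewrite [LHS]addrC Ew; ring.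
by rewrite E Ew; ring.
Qed.

Lemma natB c k : (0 < c)%N -> (p ^ c - 1 %| p ^ k - 1)%N = (c %| k)%N.
Proof.
move=> c0; have p1 := p_gt1 hp.
have pc : (1 < p ^ c)%N by rewrite -{1}(expn0 p) ltn_exp2l.
elim/ltn_ind: k => k IH.
case: (ltnP k c) => kc.
  case: k IH kc => [|k] IH kc; first by rewrite expn0 subnn !dvdn0.
  have -> : (c %| k.+1)%N = false by apply/negP => /dvdn_leq => /(_ (ltn0Sn _)); lia.
  apply/negP => /dvdn_leq; have : (p ^ k.+1 < p ^ c)%N by rewrite ltn_exp2l.
  have : (1 < p ^ k.+1)%N by rewrite -{1}(expn0 p) ltn_exp2l.
  move=> a b /(_ ltac:(lia)); lia.
have E : (p ^ k - 1 = p ^ (k - c) * (p ^ c - 1) + (p ^ (k - c) - 1))%N.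
  have : (0 < p ^ (k - c))%N by rewrite expn_gt0; lia.
  have -> : (p ^ k = p ^ (k - c) * p ^ c)%N by rewrite -expnD subnK.
  move: pc; generalize (p ^ (k - c))%N (p ^ c)%N => x y; nia.
rewrite E dvdn_addr ?dvdn_mull // IH; last by lia.
by rewrite -{2}(subnK kc) dvdn_addl.
Qed.

Lemma natC c a m : (0 < c)%N -> (a <= m)%N ->
  (p ^ c - 1 %| p ^ m - p ^ a)%N = (c %| m - a)%N.
Proof.
move=> c0 am; have p1 := p_gt1 hp.
have -> : (p ^ m - p ^ a = p ^ a * (p ^ (m - a) - 1))%N.
  by rewrite mulnBr muln1 -expnD subnKC.
rewrite Gauss_dvdr ?natB //.
apply: coprimeXr; rewrite coprime_sym prime_coprime ?(pr hp) //.
apply/negP => H.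
have : (p %| p ^ c)%N by rewrite dvdn_exp.
have pc : (0 < p ^ c)%N by rewrite expn_gt0; lia.
rewrite -(subnK pc) dvdn_addr ?H // dvdn1 => /eqP p_1; lia.
Qed.

End Char2.

Local Open Scope ring_scope.


Section Char3.
Variables (R : fieldType) (p : nat).
Hypothesis hp : p \in [pchar R].
Local Notation P := {poly R}.
Implicit Types t f g u : P.

Lemma eq_via (a b c d : P) : a - b = c - d -> (a = b <-> c = d).
Proof.
move=> E; split => H; apply/eqP; rewrite -subr_eq0.
  by rewrite -E H subrr.
by rewrite E H subrr.
Qed.

Lemma shiftt t (q : nat) : (0 < q)%N -> t ^+ q - t = t * (t ^+ q.-1 - 1).
Proof. by move=> q0; rewrite mulrBr mulr1 -exprS prednK. Qed.

Lemma pe_gt1 e : (0 < e)%N -> (1 < p ^ e)%N.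
Proof. move=> e0; rewrite -{1}(expn0 p) ltn_exp2l ?(p_gt1 hp) //. Qed.

Lemma pe_gt0 e : (0 < p ^ e)%N.
Proof. by rewrite expn_gt0 prime_gt0 ?(pr hp). Qed.

Lemma cancel_t t (X Y w : P) : size t = 2%N -> (t * X = t * Y * w <-> X = Y * w).
Proof.
move=> st; have t0 : t != 0 by rewrite -size_poly_eq0 st.
split => [E|->]; last by rewrite mulrA.
by apply: (mulfI t0); rewrite mulrA.
Qed.

Lemma DV_pow t (s : P) a b : size t = 2%N -> size s = 2%N -> (0 < a)%N ->
  DVo 1 t (t ^+ (p ^ a)%N) (s ^+ (p ^ b)%N) <-> (a %| b)%N.
Proof.
move=> st ss a0.
have key : (exists w, t ^+ (p ^ b)%N + t * w = t + t ^+ (p ^ a)%N * w) <-> (a %| b)%N.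
  rewrite -(natB hp _ a0) !subn1 -(polyA hp _ st) //; last by have := pe_gt1 a0; lia.
  split => -[w Ew]; exists w.
    move: Ew; rewrite (@eq_via _ _ (t ^+ (p ^ b)%N - t) ((t ^+ (p ^ a)%N - t) * w)); last by ring.
    by rewrite !shiftt ?pe_gt0 // cancel_t.
  rewrite (@eq_via _ _ (t ^+ (p ^ b)%N - t) ((t ^+ (p ^ a)%N - t) * w)); last by ring.
  by rewrite !shiftt ?pe_gt0 // cancel_t.
split.
  move=> [h [/(PP_pow hp _ st) [c ->] [/(EQ_pow hp _ _ st ss) -> H]]].
  by apply/key.
move=> ab; exists (t ^+ (p ^ b)%N); split; first by apply/(PP_pow hp _ st); exists b.
split; first by apply/(EQ_pow hp _ _ st ss).
by apply/key.
Qed.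

Lemma DD_pow t1 (t2 t3 : P) c a m : size t1 = 2%N -> size t2 = 2%N -> size t3 = 2%N -> (0 < c)%N ->
  DDo 1 t1 (t1 ^+ (p ^ c)%N) (t2 ^+ (p ^ a)%N) (t3 ^+ (p ^ m)%N) <-> (a <= m)%N /\ (c %| m - a)%N.
Proof.
move=> s1 s2 s3 c0.
have t0 : t1 != 0 by rewrite -size_poly_eq0 s1.
have inner : forall u, (exists k, t1 ^+ (p ^ c)%N * k + t1 = t1 * u + t1 * k) <->
    (exists k, u - 1 = (t1 ^+ (p ^ c)%N.-1 - 1) * k).
  have ef : t1 ^+ (p ^ c)%N = t1 * t1 ^+ (p ^ c)%N.-1 by rewrite -exprS prednK ?pe_gt0.
  move=> u; rewrite ef; split => -[k Ek]; exists k.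
    move: Ek; rewrite (@eq_via _ _ (t1 * (t1 ^+ (p ^ c)%N.-1 - 1) * k) (t1 * (u - 1))); last by ring.
    by move/esym/(cancel_t _ _ _ s1).
  rewrite (@eq_via _ _ (t1 * (t1 ^+ (p ^ c)%N.-1 - 1) * k) (t1 * (u - 1))); last by ring.
  by apply/esym/(cancel_t _ _ _ s1).
have C0 : (0 < (p ^ c)%N.-1)%N by have := pe_gt1 c0; lia.
split.
  move=> [v [/(PP_pow hp _ s1) [a' ->] [/(EQ_pow hp _ _ s1 s2) ->
         [w [/(PP_pow hp _ s1) [m' ->] [/(EQ_pow hp _ _ s1 s3) -> [u [Eu /inner Hk]]]]]]]].
  have u0 : u != 0 by apply/eqP => u0; move: Eu; rewrite u0 mulr0 => /eqP; rewrite expf_eq0 (negbTE t0) andbF.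
  have am : (a <= m)%N.
    rewrite -(leq_exp2l _ _ (p_gt1 hp)).
    have := congr1 (fun q : P => size q) Eu; rewrite /= size_mul ?expf_neq0 // !sz_pe //.
    have : size u != 0%N by rewrite size_poly_eq0.
    szlia.
  have pam : (p ^ a <= p ^ m)%N by rewrite leq_exp2l ?(p_gt1 hp).
  have Eu2 : u = t1 ^+ (p ^ m - p ^ a)%N.
    apply: (mulfI (expf_neq0 (p ^ a)%N t0)); rewrite -Eu -exprD subnKC //.
  move: Hk; rewrite Eu2 (polyA hp _ s1) // -(natC hp c0 am) -subn1 => H.
  by split.
move=> [am cma].
have pam : (p ^ a <= p ^ m)%N by rewrite leq_exp2l ?(p_gt1 hp).
exists (t1 ^+ (p ^ a)%N); split; first by apply/(PP_pow hp _ s1); exists a.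
split; first by apply/(EQ_pow hp _ _ s1 s2).
exists (t1 ^+ (p ^ m)%N); split; first by apply/(PP_pow hp _ s1); exists m.
split; first by apply/(EQ_pow hp _ _ s1 s3).
exists (t1 ^+ (p ^ m - p ^ a)%N); split; first by rewrite -exprD subnKC.
apply/inner; rewrite (polyA hp _ s1) // -subn1 (natC hp c0 am) //.
Qed.

End Char3.

Local Open Scope ring_scope.

Section Assembly.
Variables (R : fieldType) (p : nat).
Hypothesis hp : p \in [pchar R].
Local Notation P := {poly R}.

Definition DOMp (a b : P) := size a = 2%N /\ exists e, (0 < e)%N /\ b = a ^+ (p ^ e)%N.
Definition Fn (a b : P) := logn p (size b).-1.

Lemma FnE (t : P) e : size t = 2%N -> Fn t (t ^+ (p ^ e)%N) = e.
Proof. by move=> st; rewrite /Fn sz_pe // pfactorK ?(pr hp). Qed.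

Lemma Hpos a b : DOMp a b -> (0 < Fn a b)%N.
Proof. by move=> [st [e [e0 ->]]]; rewrite FnE. Qed.

Lemma Hsurj n : (0 < n)%N -> exists a b, DOMp a b /\ Fn a b = n.
Proof.
move=> n0; exists 'X, ('X ^+ (p ^ n)%N); split; last by rewrite FnE // size_polyX.
by split; [exact: size_polyX | exists n].
Qed.

Lemma Hdom (e : nat -> P) : sat e domR <-> DOMp (e 0%N) (e 1%N).
Proof. rewrite domR_sat one_collapse; exact: (DOM_pow hp). Qed.

Lemma Heq (e : nat -> P) : DOMp (e 0%N) (e 1%N) -> DOMp (e 2%N) (e 3%N) ->
  (sat e eqR <-> Fn (e 0%N) (e 1%N) = Fn (e 2%N) (e 3%N)).
Proof.
move=> [s0 [a [a0 E1]]] [s2 [b [b0 E3]]].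
rewrite eqR_sat one_collapse E1 E3 !FnE //; exact: EQ_pow.
Qed.

Lemma Hle (e : nat -> P) : DOMp (e 0%N) (e 1%N) -> DOMp (e 2%N) (e 3%N) ->
  (sat e leR <-> (Fn (e 0%N) (e 1%N) <= Fn (e 2%N) (e 3%N))%N).
Proof.
move=> [s0 [a [a0 E1]]] [s2 [b [b0 E3]]].
rewrite leR_sat one_collapse E1 E3 !FnE //; exact: LE_pow.
Qed.

Lemma Hdv (e : nat -> P) : DOMp (e 0%N) (e 1%N) -> DOMp (e 2%N) (e 3%N) ->
  (sat e dvR <-> (Fn (e 0%N) (e 1%N) %| Fn (e 2%N) (e 3%N))%N).
Proof.
move=> [s0 [a [a0 E1]]] [s2 [b [b0 E3]]].
rewrite dvR_sat one_collapse E1 E3 !FnE //; exact: DV_pow.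
Qed.

Lemma HD (e : nat -> P) : DOMp (e 0%N) (e 1%N) -> DOMp (e 2%N) (e 3%N) ->
      DOMp (e 4%N) (e 5%N) ->
      (sat e dR <-> (Fn (e 2%N) (e 3%N) <= Fn (e 4%N) (e 5%N))%N /\
                    (Fn (e 0%N) (e 1%N) %| Fn (e 4%N) (e 5%N) - Fn (e 2%N) (e 3%N))%N).
Proof.
move=> [s0 [c [c0 E1]]] [s2 [a [a0 E3]]] [s4 [m [m0 E5]]].
rewrite dR_sat one_collapse E1 E3 E5 !FnE //; exact: DD_pow.
Qed.

Definition trR := tr domR eqR leR dvR dR.

Lemma trR_sat (f : nform) (e : nat -> P) :
  (forall i, i \in nfv f -> DOMp (e (L i)) (e (L i).+1)) ->
  (sat e (trR f) <-> nsat (nenv Fn e) f).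
Proof.
have [B1 B2 B3 B4 B5] := bvs.
apply: tr_sat => //.
- exact: Hpos.
- exact: Hsurj.
- exact: Hdom.
- exact: Heq.
- exact: Hle.
- exact: Hdv.
- exact: HD.
Qed.

End Assembly.

Local Open Scope ring_scope.

Definition dom4 := RAnd (rren (asig 0 0 0) domR) (rren (asig 1 1 1) domR).

Lemma nfvE : [/\ all (fun i => i < 4)%N (nfv ZEqF), all (fun i => i < 6)%N (nfv ZAddF)
  & all (fun i => i < 6)%N (nfv ZMulF)].
Proof. by split; vm_compute. Qed.

Section Final.
Variables (R : fieldType) (p : nat).
Hypothesis hp : p \in [pchar R].
Local Notation P := {poly R}.

Definition F4 (a : seq P) : int := (Fn p (nth 0 a 0) (nth 0 a 1))%:Z - (Fn p (nth 0 a 2) (nth 0 a 3))%:Z.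

Lemma dom4P (a0 a1 a2 a3 : P) : holds dom4 [:: a0; a1; a2; a3] <-> DOMp p a0 a1 /\ DOMp p a2 a3.
Proof.
have [B1 _ _ _ _] := bvs.
rewrite /holds /dom4; cbn [sat].
rewrite !sat_ren; try (by apply: asig_ok).
by rewrite !(Hdom hp).
Qed.

Lemma D4 (a : seq P) : size a = 4%N /\ holds dom4 a ->
  exists a0 a1 a2 a3, a = [:: a0; a1; a2; a3] /\ DOMp p a0 a1 /\ DOMp p a2 a3.
Proof.
case: a => [|a0 [|a1 [|a2 [|a3 [|? ?]]]]] [] // _ /dom4P H.
by exists a0, a1, a2, a3.
Qed.

Lemma interp4 : interp_arith 4 dom4 (trR ZEqF) (trR ZAddF) (trR ZMulF) F4.
Proof.
split.
- move=> z.
  have [m [n [m0 [n0 E]]]] : exists m n : nat, (0 < m)%N /\ (0 < n)%N /\ z = m%:Z - n%:Z.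
    case: z => k; first by exists k.+1, 1%N; split => //; split => //; lia.
    by exists 1%N, k.+2; split => //; split => //; rewrite NegzE; lia.
  have [a0 [a1 [Da Fa]]] := Hsurj hp m0.
  have [a2 [a3 [Db Fb]]] := Hsurj hp n0.
  exists [:: a0; a1; a2; a3]; split; first by split => //; apply/dom4P; split.
  by rewrite /F4 /= Fa Fb E.
- move=> a b /D4 [a0 [a1 [a2 [a3 [-> [Da1 Da2]]]]]] /D4 [b0 [b1 [b2 [b3 [-> [Db1 Db2]]]]]].
  have [H _ _] := nfvE.
  rewrite /holds (trR_sat hp); last first.
    move=> i /(allP H); case: i => [|[|[|[|i]]]] // _; by rewrite /L /=.
  have P0 := Hpos hp Da1; have P1 := Hpos hp Da2; have P2 := Hpos hp Db1; have P3 := Hpos hp Db2.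
  rewrite ZEqP; rewrite /nenv /L /F4 /=; try done.
  move: P0 P1 P2 P3.
  generalize (Fn p a0 a1) (Fn p a2 a3) (Fn p b0 b1) (Fn p b2 b3) => x y z w.
  move=> *; split => ?; lia.
- move=> a b c /D4 [a0 [a1 [a2 [a3 [-> [Da1 Da2]]]]]] /D4 [b0 [b1 [b2 [b3 [-> [Db1 Db2]]]]]]
    /D4 [c0 [c1 [c2 [c3 [-> [Dc1 Dc2]]]]]].
  have [_ H _] := nfvE.
  rewrite /holds (trR_sat hp); last first.
    move=> i /(allP H); case: i => [|[|[|[|[|[|i]]]]]] // _; by rewrite /L /=.
  have P0 := Hpos hp Da1; have P1 := Hpos hp Da2; have P2 := Hpos hp Db1; have P3 := Hpos hp Db2.
  have P4 := Hpos hp Dc1; have P5 := Hpos hp Dc2.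
  rewrite ZAddP; rewrite /nenv /L /F4 /=; try done.
  move: P0 P1 P2 P3 P4 P5.
  generalize (Fn p a0 a1) (Fn p a2 a3) (Fn p b0 b1) (Fn p b2 b3) (Fn p c0 c1) (Fn p c2 c3) => x y z w u v.
  move=> *; split => ?; lia.
- move=> a b c /D4 [a0 [a1 [a2 [a3 [-> [Da1 Da2]]]]]] /D4 [b0 [b1 [b2 [b3 [-> [Db1 Db2]]]]]]
    /D4 [c0 [c1 [c2 [c3 [-> [Dc1 Dc2]]]]]].
  have [_ _ H] := nfvE.
  rewrite /holds (trR_sat hp); last first.
    move=> i /(allP H); case: i => [|[|[|[|[|[|i]]]]]] // _; by rewrite /L /=.
  have P0 := Hpos hp Da1; have P1 := Hpos hp Da2; have P2 := Hpos hp Db1; have P3 := Hpos hp Db2.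
  have P4 := Hpos hp Dc1; have P5 := Hpos hp Dc2.
  rewrite ZMulP; rewrite /nenv /L /F4 /=; try done.
  move: P0 P1 P2 P3 P4 P5.
  generalize (Fn p a0 a1) (Fn p a2 a3) (Fn p b0 b1) (Fn p b2 b3) (Fn p c0 c1) (Fn p c2 c3) => x y z w u v.
  move=> *; split => ?; nia.
Qed.

Lemma interp2 : interp2_Zpos_le_dvd domR eqR leR dvR (@Fn R p).
Proof.
split.
- move=> a1 a2 H; apply: (Hpos hp); exact: (proj1 (Hdom hp (fun i => nth 0 [:: a1; a2] i)) H).
- move=> n n0; have [a [b [D E]]] := Hsurj hp n0; exists a, b; split => //.
  by rewrite /holds (Hdom hp).
- move=> a1 a2 b1 b2; rewrite /holds !(Hdom hp) /= => Da Db.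
  exact: (Heq hp (e := fun i => nth 0 [:: a1; a2; b1; b2] i)).
- move=> a1 a2 b1 b2; rewrite /holds !(Hdom hp) /= => Da Db.
  exact: (Hle hp (e := fun i => nth 0 [:: a1; a2; b1; b2] i)).
- move=> a1 a2 b1 b2; rewrite /holds !(Hdom hp) /= => Da Db.
  exact: (Hdv hp (e := fun i => nth 0 [:: a1; a2; b1; b2] i)).
Qed.
End Final.

Theorem theorem2p5 :
  (exists dom eqf le dv : rform,
     forall R : fieldType, pos_char R ->
       exists F : {poly R} -> {poly R} -> nat,
         interp2_Zpos_le_dvd dom eqf le dv F)
  /\
  (exists (n : nat) (dom eqf add mul : rform),
     forall R : fieldType, pos_char R ->
       exists F : seq {poly R} -> int,
         interp_arith n dom eqf add mul F).
Proof.
split.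
  exists domR, eqR, leR, dvR => R [p hp]; exists (Fn p); exact: interp2.
exists 4%N, dom4, (trR ZEqF), (trR ZAddF), (trR ZMulF) => R [p hp].
exists (F4 p); exact: interp4.
Qed.
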